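(* Let $(X,T)$ and $(Y,S)$ be dynamical systems. The following are equivalent: (1) $(X,T)$ and $(Y,S)$ are weakly disjoint; (2) both $\mathrm{Tran}_{k\mathcal{N}_S}(X,T)$ and $\mathrm{Tran}_{k\mathcal{N}_T}(Y,S)$ are dense $G_\delta$ subsets (of $X$ and $Y$ respectively); (3) $\mathrm{Tran}_{k\mathcal{N}_S}(X,T)$ is a dense $G_\delta$ subset of $X$; (4) both $\mathrm{Tran}_{k\mathcal{N}_S}(X,T)$ and $\mathrm{Tran}_{k\mathcal{N}_T}(Y,S)$ are nonempty; (5) $\mathrm{Tran}_{k\mathcal{N}_S}(X,T)$ is nonempty.
   Context: A dynamical system $(X,T)$: $X$ is a compact metric space with more than one point and without isolated points, $T:X\to X$ a continuous surjection. ''Opene'' means open and nonempty. $N_T(U,V)=\{n\in\mathbb{Z}_+:U\cap T^{-n}V\neq\varnothing\}$; $\mathcal{N}_T$ is the family of all subsets of $\mathbb{Z}_+$ containing $N_T(U,V)$ for some opene $U,V\subset X$ (similarly $\mathcal{N}_S$ for $(Y,S)$). For a family $\mathcal{F}$ of subsets of $\mathbb{Z}_+$, its dual is $k\mathcal{F}=\{F\subset\mathbb{Z}_+:F\cap F'\neq\varnothing\ \forall F'\in\mathcal{F}\}$. For $x\in X$ and $G\subset X$, $n_T(x,G)=\{n\in\mathbb{Z}_+:T^nx\in G\}$; $\mathrm{Tran}_{\mathcal{F}}(X,T)$ is the set of $x\in X$ with $n_T(x,U)\in\mathcal{F}$ for every opene $U\subset X$. $(X,T)$ and $(Y,S)$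 are weakly disjoint if $(X\times Y,T\times S)$ is transitive, i.e. $N_{T\times S}(A,B)\neq\varnothing$ for all opene $A,B\subset X\times Y$. *)

(* Defs.v *)
From HB Require Import structures.
From mathcomp Require Import all_boot all_order all_algebra.
From mathcomp Require Import all_classical all_reals all_analysis.
From mathcomp Require Import borel_hierarchy.
Set Implicit Arguments. Unset Strict Implicit. Unset Printing Implicit Defensive.
Import Order.TTheory GRing.Theory Num.Theory.
Local Open Scope classical_set_scope.

(* A compact metric space (pseudometric + Hausdorff = metric), with more
   than one point and without isolated points, with a continuous surjection. *)
Definition dynsys {R : realType} (X : pseudoMetricType R) (T : X -> X) : Prop :=
  [/\ compact [set: X], hausdorff_space X,
      (exists x y : X, x <> y),
      (forall x : X, ~ open [set x]) &
      continuous T /\ (forall y : X, exists x, T x = y)].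

Definition opene {X : topologicalType} (U : set X) : Prop := open U /\ U !=set0.

Definition hitting_times {X : Type} (T : X -> X) (U V : set X) : set nat :=
  [set n | U `&` (iter n T) @^-1` V !=set0].

Definition NFam {X : topologicalType} (T : X -> X) : set (set nat) :=
  [set F | exists U V : set X, [/\ opene U, opene V & hitting_times T U V `<=` F]].

Definition kdual (Fam : set (set nat)) : set (set nat) :=
  [set F | forall F', Fam F' -> F `&` F' !=set0].

Definition visit_times {X : Type} (T : X -> X) (x : X) (G : set X) : set nat :=
  [set n | G (iter n T x)].

Definition Tran {X : topologicalType} (Fam : set (set nat)) (T : X -> X) : set X :=
  [set x | forall U : set X, opene U -> Fam (visit_times T x U)].

Definition prod_map {X Y : Type} (T : X -> X) (S : Y -> Y) : X * Y -> X * Y :=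
  fun p => (T p.1, S p.2).

Definition transitive_sys {X : topologicalType} (T : X -> X) : Prop :=
  forall A B : set X, opene A -> opene B -> hitting_times T A B !=set0.

Definition weakly_disjoint {X Y : topologicalType} (T : X -> X) (S : Y -> Y) : Prop :=
  transitive_sys (prod_map T S).

(* Main.v *)
Require Import Defs.
From HB Require Import structures.
From mathcomp Require Import all_boot all_order all_algebra.
From mathcomp Require Import all_classical all_reals all_analysis.
From mathcomp Require Import borel_hierarchy.
Import Order.TTheory GRing.Theory Num.Theory.
Local Open Scope classical_set_scope.

Definition ptd (X : Type) (x0 : X) : Type := X.
HB.instance Definition _ (R : realType) (X : pseudoMetricType R) (x0 : X) :=
  PseudoMetric.copy (ptd X x0) X.
HB.instance Definition _ (R : realType) (X : pseudoMetricType R) (x0 : X) :=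
  isPointed.Build (ptd X x0) x0.

Section Aux.
Set Implicit Arguments. Unset Strict Implicit.
Context {R : realType}.
Lemma reg_opene (X : pseudoMetricType R) (W : set X) : opene W ->
  exists O, opene O /\ closure O `<=` W.
Proof.
move=> [oW [w Ww]].
have : nbhs w W by apply: open_nbhs_nbhs.
move=> /nbhs_ballP[e /= e0 heW].
have e20 : (0 < e / 2)%R by rewrite divr_gt0.
exists (ball w (e / 2))°; split.
  split; first exact: open_interior.
  by exists w; apply: nbhsx_ballx.
move=> y cly; apply: heW.
have /cly[z [/interior_subset zb yz]] : nbhs y (ball y (e / 2)) by apply: nbhsx_ballx.
rewrite (splitr e); apply: (ball_triangle zb); exact: ball_sym.
Qed.

Lemma baire_compact (X : pseudoMetricType R) (F : (set X)^nat) :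
  compact [set: X] ->
  (forall i, open (F i) /\ dense (F i)) -> dense (\bigcap_i F i).
Proof.
move=> cX odF D D0 oD.
have step : forall p : nat * set X, exists W1 : set X,
   opene p.2 -> opene W1 /\ closure W1 `<=` p.2 `&` F p.1.
  move=> [n O] /=; have [hO|hO] := pselect (opene O); last by exists set0.
  have hI : opene (O `&` F n).
    split; first exact: openI hO.1 (odF n).1.
    exact: (odF n).2 O hO.2 hO.1.
  have [W1 [h1 h2]] := reg_opene hI.
  by exists W1.
have [g hg] := choice step.
pose fix O n := if n is m.+1 then g (m.+1, O m) else g (0%N, D).
have hO0 : opene (O 0%N) /\ closure (O 0%N) `<=` D `&` F 0%N.
  exact: (hg (0%N, D)).
have hOS n : opene (O n) -> opene (O n.+1) /\ closure (O n.+1) `<=` O n `&` F n.+1.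
  exact: (hg (n.+1, O n)).
have hOo n : opene (O n).
  elim: n => [|n IH]; first exact: hO0.1.
  exact: (hOS n IH).1.
have nest m k : O (k + m)%N `<=` O m.
  elim: k => [|k IH] //= z Oz; apply: IH.
  have := (hOS _ (hOo (k + m)%N)).2 z (subset_closure Oz).
  by case.
have pa n : exists x, O n x by have [_ ] := hOo n.
have [a ha] := choice pa.
have [l [_ cl]] := cX (a @ \oo) _ filterT.
have clO m : closure (O m) l.
  move=> B nB; apply: cl nB.
  exists m => // n /= mn; rewrite -(subnK mn); apply: nest; exact: ha.
exists l; split.
  by have [] := hO0.2 l (clO 0%N).
case=> [|i] _.
  by have [] := hO0.2 l (clO 0%N).
by have [] := (hOS _ (hOo i)).2 l (clO i.+1).
Qed.

Lemma openX' (X Y : topologicalType) (A : set X) (B : set Y) :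
  open A -> open B -> open (A `*` B).
Proof.
move=> oA oB; rewrite openE => p [Ap Bp].
rewrite /interior; exists (A, B) => //=; split.
  exact: open_nbhs_nbhs.
exact: open_nbhs_nbhs.
Qed.

Lemma open_box (X Y : topologicalType) (A : set (X * Y)) p :
  open A -> A p -> exists U V, [/\ open_nbhs p.1 U, open_nbhs p.2 V & U `*` V `<=` A].
Proof.
rewrite openE => oA /oA; rewrite /interior => -[[U V] /= [nU nV] sUV].
move: nU nV; rewrite !nbhsE => -[U1 oU1 sU1] [V1 oV1 sV1].
exists U1, V1; split => // -[x y] [/= /sU1 ? /sV1 ?]; exact: sUV.
Qed.

Lemma diff_pt (X : topologicalType) (U : set X) (p : X) :
  hausdorff_space X -> (forall x : X, ~ open [set x]) -> opene U ->
  opene (U `&` ~` [set p]).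
Proof.
move=> hX nI [oU [u Uu]]; split.
  apply: openI => //; apply: closed_openC.
  exact: (accessible_closed_set1 (hausdorff_accessible hX)).
apply: contrapT => hne.
have Up x : U x -> x = p.
  by move=> Ux; apply: contrapT => xp; apply: hne; exists x.
apply: (nI p); suff <- : U = [set p] by [].
apply/seteqP; split => x; first exact: Up.
by move=> ->; rewrite -(Up u Uu).
Qed.

Lemma iter_cont (X : topologicalType) (T : X -> X) :
  continuous T -> forall n, continuous (iter n T).
Proof.
move=> cT; elim=> [|n IH] x /=; first exact: cvg_id.
exact: (continuous_comp (IH x) (cT _)).
Qed.

Lemma iter_surj (X : Type) (T : X -> X) :
  (forall y, exists x, T x = y) -> forall n y, exists x, iter n T x = y.
Proof.
move=> sT; elim=> [|n IH] y /=; first by exists y.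
have [z <-] := sT y; have [x <-] := IH z; by exists x.
Qed.

Lemma iter_prod (X Y : Type) (T : X -> X) (S : Y -> Y) n p :
  iter n (prod_map T S) p = (iter n T p.1, iter n S p.2).
Proof. by elim: n => [|n IH] /=; [case: p | rewrite IH]. Qed.

Definition Box {X Y : topologicalType} (T : X -> X) (S : Y -> Y) :=
  forall U1 U2 V1 V2, opene U1 -> opene U2 -> opene V1 -> opene V2 ->
  exists n, hitting_times T U1 U2 n /\ hitting_times S V1 V2 n.

Lemma Box_sym {X Y : topologicalType} (T : X -> X) (S : Y -> Y) :
  Box T S -> Box S T.
Proof.
move=> h V1 V2 U1 U2 hV1 hV2 hU1 hU2.
by have [n [? ?]] := h U1 U2 V1 V2 hU1 hU2 hV1 hV2; exists n.
Qed.

Lemma wd_Box {X Y : topologicalType} (T : X -> X) (S : Y -> Y) :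
  weakly_disjoint T S <-> Box T S.
Proof.
split.
  move=> h U1 U2 V1 V2 [oU1 [u1 hu1]] [oU2 [u2 hu2]] [oV1 [v1 hv1]] [oV2 [v2 hv2]].
  have [||n [[x y] [[/= Ux Vy]]]] := h (U1 `*` V1) (U2 `*` V2).
  - by split; [exact: openX' | exists (u1, v1)].
  - by split; [exact: openX' | exists (u2, v2)].
  rewrite /preimage /= iter_prod /= => -[? ?].
  by exists n; split; [exists x | exists y].
move=> h A B [oA [p Ap]] [oB [q Bq]].
have [U1 [V1 [[oU1 U1p] [oV1 V1p] s1]]] := open_box oA Ap.
have [U2 [V2 [[oU2 U2p] [oV2 V2p] s2]]] := open_box oB Bq.
have [||||n [[x [Ux Ux']] [y [Vy Vy']]]] := h U1 U2 V1 V2.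
- by split => //; exists p.1.
- by split => //; exists q.1.
- by split => //; exists p.2.
- by split => //; exists q.2.
exists n, (x, y); split; first exact: s1.
rewrite /preimage /= iter_prod; exact: s2.
Qed.


Lemma kdualP {Y : topologicalType} (S : Y -> Y) (F : set nat) :
  kdual (NFam S) F -> forall V W, opene V -> opene W ->
  exists n, F n /\ hitting_times S V W n.
Proof.
move=> h V W hV hW.
have [n [Fn Hn]] := h (hitting_times S V W) (ex_intro _ V (ex_intro _ W (And3 hV hW (@subset_refl _ _)))).
by exists n.
Qed.

Lemma openeT (X : topologicalType) (x : X) : opene [set: X].
Proof. by split; [exact: openT | exists x]. Qed.

Lemma tran_Box (X Y : topologicalType) (T : X -> X) (S : Y -> Y) (y0 : Y) :
  hausdorff_space X -> (forall x : X, ~ open [set x]) ->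
  continuous S -> (forall y, exists x, S x = y) ->
  Tran (kdual (NFam S)) T !=set0 -> Box T S.
Proof.
move=> hX nI cS sS [x hx] U1 U2 V1 V2 hU1 hU2 hV1 hV2.
have [m [Um _]] := kdualP (hx U1 hU1) (openeT y0) (openeT y0).
pose fix W k := if k is k'.+1 then W k' `&` ~` [set iter k'.+1 T x]
                else U2 `&` ~` [set x].
have hW k : opene (W k).
  elim: k => [|k IH] /=; exact: diff_pt.
have hW2 k z : W k z -> U2 z /\ forall i, (i <= k)%N -> z <> iter i T x.
  elim: k z => [|k IH] z /=.
    by move=> [U2z zx]; split => // i; rewrite leqn0 => /eqP -> /=.
  move=> [/IH [U2z hz] zk]; split => // i.
  rewrite leq_eqVlt => /orP[/eqP -> //|]; rewrite ltnS; exact: hz.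
have hV' : opene ((iter m S) @^-1` V1).
  case: hV1 => oV1 [v1 hv1]; split.
    have := proj1 (continuousP _) (@iter_cont _ _ cS m) V1 oV1.
    by [].
  by have [y hy] := iter_surj sS m v1; exists y; rewrite /preimage /= hy.
have [n [Wn [y [V'y V2y]]]] := kdualP (hx (W m) (hW m)) hV' hV2.
have [U2n hn] := hW2 _ _ Wn.
have mn : (m < n)%N.
  by rewrite ltnNge; apply/negP => nm; exact: (hn n nm erefl).
exists (n - m)%N; split.
  exists (iter m T x); split => //.
  by rewrite /preimage /= -iterD subnK // ltnW.
exists (iter m S y); split => //.
by rewrite /preimage /= -iterD subnK // ltnW.
Qed.

Lemma compact_sc {T : pseudoMetricType R} (x0 : T) :
  compact [set: T] -> @second_countable T.
Proof.
move=> cT.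
have := @compact_second_countable R (ptd T x0) cT.
by [].
Qed.


Lemma pibase (X : pseudoMetricType R) (x0 : X) : compact [set: X] ->
  exists b : nat -> set X, (forall i, open (b i)) /\
    forall U, opene U -> exists i, b i !=set0 /\ b i `<=` U.
Proof.
move=> /(compact_sc x0) [B /countable_injP [f injf] [oB bB]].
pose b n := if pselect (exists U, B U /\ f U = n) is left h then projT1 (cid h) else set0.
have bE U : B U -> b (f U) = U.
  move=> BU; rewrite /b; case: pselect => [h|]; last by move=> nh; exfalso; apply: nh; exists U.
  case: (cid h) => V [BV fV] /=; apply: injf; rewrite ?inE //.
exists b; split.
  move=> i; rewrite /b; case: pselect => [h|_]; last exact: open0.
  by case: (cid h) => V [BV _] /=; exact: oB.
move=> U [oU [u Uu]].
have : nbhs u U by exact: open_nbhs_nbhs.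
move=> /(bB u) [V [BV Vu] VU].
by exists (f V); rewrite bE //; split => //; exists u.
Qed.


Lemma dense_ne (X : topologicalType) (A : set X) (x0 : X) : dense A -> A !=set0.
Proof.
move=> d; have [x [_ hx]] := d setT (ex_intro _ x0 I) openT; by exists x.
Qed.

Lemma Box_tran3 (X Y : pseudoMetricType R) (T : X -> X) (S : Y -> Y) (x0 : X) (y0 : Y) :
  compact [set: X] -> compact [set: Y] -> continuous T -> Box T S ->
  dense (Tran (kdual (NFam S)) T) /\ Gdelta (Tran (kdual (NFam S)) T).
Proof.
move=> cX cY cT hB.
have [b [ob bb]] := pibase x0 cX.
have [c [oc cc]] := pibase y0 cY.
pose P (t : nat * nat * nat) := opene (b t.1.1) /\ opene (c t.1.2) /\ opene (c t.2).
pose G (t : nat * nat * nat) : set X := [set x | P t -> exists n,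
  b t.1.1 (iter n T x) /\ hitting_times S (c t.1.2) (c t.2) n].
pose G' (k : nat) : set X := if unpickle k is Some t then G t else setT.
have oG t : open (G t).
  have [Pt|nPt] := pselect (P t).
    suff -> : G t = \bigcup_(n in hitting_times S (c t.1.2) (c t.2))
                       (iter n T @^-1` b t.1.1).
      apply: bigcup_open => n _.
      have := proj1 (continuousP _) (@iter_cont _ _ cT n) _ (ob t.1.1).
      by [].
    apply/seteqP; split => x /=.
      by move=> /(_ Pt) [n [h1 h2]]; exists n.
    by move=> [n h2 h1] _; exists n.
  suff -> : G t = setT by exact: openT.
  by apply/seteqP; split => x // _ /nPt [].
have dG t : dense (G t).
  move=> D D0 oD; have [Pt|nPt] := pselect (P t); last first.
    by case: D0 => d Dd; exists d; split => // /nPt [].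
  case: Pt => h1 [h2 h3].
  have [n [[z [Dz bz]] hs]] := hB D (b t.1.1) (c t.1.2) (c t.2) (conj oD D0) h1 h2 h3.
  by exists z; split => // _; exists n; split.
have odG' k : open (G' k) /\ dense (G' k).
  rewrite /G'; case: unpickle => [t|]; first by split; [apply: oG | apply: dG].
  by split; [exact: openT | move=> D [d Dd] _; exists d].
have TE : Tran (kdual (NFam S)) T = \bigcap_k G' k.
  apply/seteqP; split => x.
    move=> hx k _; rewrite /G'; case: unpickle => [t|] //.
    move=> [h1 [h2 h3]]; have [n [vn hn]] := kdualP (hx _ h1) h2 h3.
    by exists n.
  move=> hx U hU F' [V [W [hV hW sF]]].
  have [i [bi0 biU]] := bb U hU.
  have [j [cj0 cjV]] := cc V hV.
  have [k [ck0 ckW]] := cc W hW.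
  have := hx (pickle (i, j, k)) I; rewrite /G' pickleK /=.
  case=> [|n [bn [y [cy cy']]]].
    by split; [|split]; split.
  exists n; split; first exact: biU.
  by apply: sF; exists y; split; [exact: cjV | exact: ckW].
split; first by rewrite TE; exact: baire_compact.
by exists G' => // k; exact: (odG' k).1.
Qed.

End Aux.

Theorem theorem5p2 (R : realType) (X Y : pseudoMetricType R)
  (T : X -> X) (S : Y -> Y) :
  dynsys T -> dynsys S ->
  let P1 := weakly_disjoint T S in
  let P2 := (dense (Tran (kdual (NFam S)) T) /\ Gdelta (Tran (kdual (NFam S)) T)) /\
            (dense (Tran (kdual (NFam T)) S) /\ Gdelta (Tran (kdual (NFam T)) S)) in
  let P3 := dense (Tran (kdual (NFam S)) T) /\ Gdelta (Tran (kdual (NFam S)) T) in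
  let P4 := Tran (kdual (NFam S)) T !=set0 /\ Tran (kdual (NFam T)) S !=set0 in
  let P5 := Tran (kdual (NFam S)) T !=set0 in
  [/\ P1 <-> P2, P1 <-> P3, P1 <-> P4 & P1 <-> P5].
Proof.
move=> [cX hX [x0 _] nIX [cT sT]] [cY hY [y0 _] nIY [cS sS]] P1 P2 P3 P4 P5.
have h1B : P1 <-> Box T S := wd_Box T S.
have hB3 : Box T S -> P3 := Box_tran3 x0 y0 cX cY cT.
have hB3' : Box T S -> dense (Tran (kdual (NFam T)) S) /\ Gdelta (Tran (kdual (NFam T)) S).
  by move=> h; exact: (Box_tran3 y0 x0 cY cX cS (Box_sym h)).
have h35 : P3 -> P5 by move=> [d _]; exact: dense_ne x0 d.
have h5B : P5 -> Box T S by exact: tran_Box y0 hX nIX cS sS.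
have h1_5 : P1 -> P5 by move=> /h1B /hB3 /h35.
have h5_1 : P5 -> P1 by move=> /h5B /h1B.
split; split.
- by move=> /h1B hB; split; [exact: hB3 | exact: hB3'].
- by move=> [h _]; exact: h5_1 (h35 h).
- by move=> /h1B.
- by move=> /h35 /h5_1.
- move=> /h1B hB; split; first exact: h35 (hB3 hB).
  by have [d _] := hB3' hB; exact: dense_ne y0 d.
- by move=> [h _]; exact: h5_1.
- exact: h1_5.
- exact: h5_1.
Qed.
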